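(* Let $r\geq 3$ and let $G$ be a connected $(P_4,K_{1,r})$-free graph with at least $3$ vertices. Then $rx_3(G)\leq sdiam_3(G)+r+3$.
   Context: All graphs are finite, simple, undirected. A tree in an edge-colored graph is rainbow if no two of its edges have the same color; an $S$-tree is a tree containing all vertices of $S$. A $3$-rainbow coloring of a connected graph $G$ is an edge-coloring (adjacent edges may share colors) such that every $3$-element vertex set $S$ has a rainbow $S$-tree; $rx_3(G)$ is the minimum number of colors in such a coloring. $sdiam_3(G)$ is the maximum, over all $3$-element $S\subseteq V(G)$, of the minimum number of edges of an $S$-tree. $(P_4,K_{1,r})$-free means no induced subgraph isomorphic to the path $P_4$ on $4$ vertices or to the star $K_{1,r}$. *)

(* Defs.v *)
From mathcomp Require Import all_boot.
Set Implicit Arguments. Unset Strict Implicit. Unset Printing Implicit Defensive.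

Section Graphs.
Variable T : finType.
Variable e : rel T.

Definition simple_graph : Prop := symmetric e /\ irreflexive e.
Definition connected_graph : Prop := forall x y : T, connect e x y.

Definition P4_free : Prop :=
  ~ exists a b c d : T,
    [/\ e a b, e b c, e c d,
        [&& a != c, b != d & a != d] &
        [&& ~~ e a c, ~~ e b d & ~~ e a d]].

Definition star_free (r : nat) : Prop :=
  ~ exists (v : T) (L : {set T}),
    [/\ #|L| = r, v \notin L, {in L, forall x, e v x} &
        {in L &, forall x y, x != y -> ~~ e x y}].

Definition is_edge (f : {set T}) : bool :=
  [exists x, exists y, e x y && (f == [set x; y])].

Definition is_tree (V : {set T}) (F : {set {set T}}) : bool :=
  [&& V != set0,
      [forall f in F, is_edge f && (f \subset V)],
      [forall x in V, forall y in V,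
          connect [rel a b | [set a; b] \in F] x y] &
      #|F| == #|V| - 1].

Definition is_Stree (S : {set T}) (VF : {set T} * {set {set T}}) : bool :=
  is_tree VF.1 VF.2 && (S \subset VF.1).

Definition sdist (S : {set T}) : nat :=
  \big[minn/#|T|]_(VF : {set T} * {set {set T}} | is_Stree S VF) #|VF.2|.

Definition sdiam3 : nat := \max_(S : {set T} | #|S| == 3) sdist S.

Definition rainbow (c : {set T} -> nat) (F : {set {set T}}) : bool :=
  [forall f in F, forall g in F, (c f == c g) ==> (f == g)].

Definition rainbow3_coloring k (c : {ffun {set T} -> 'I_k}) : bool :=
  [forall S : {set T}, (#|S| == 3) ==>
     [exists VF, is_Stree S VF && rainbow (fun f => nat_of_ord (c f)) VF.2]].

(* rx_3: least k such that a 3-rainbow coloring with k colours exists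
   (k = #|T|^2 always suffices for connected graphs, the bound being a default) *)
Definition rx3 : nat :=
  \big[minn/#|T| ^ 2]_(k < (#|T| ^ 2).+1 |
       [exists c : {ffun {set T} -> 'I_k}, rainbow3_coloring c]) (k : nat).

End Graphs.

(* Main.v *)
Require Import Defs.
From mathcomp Require Import all_boot.
From mathcomp Require Import zify.
Set Implicit Arguments. Unset Strict Implicit. Unset Printing Implicit Defensive.



Section Trees.
Variables (T : finType) (e : rel T).

Lemma tree1 v : is_tree e [set v] set0.
Proof.
apply/and4P; split.
- by apply/set0Pn; exists v; rewrite inE.
- by apply/forall_inP => f; rewrite inE.
- apply/forall_inP => x; rewrite inE => /eqP->; apply/forall_inP => y.
  by rewrite inE => /eqP->; apply: connect0.
- by rewrite cards0 cards1.
Qed.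

Lemma tree_add V F x y : is_tree e V F -> x \notin V -> y \in V -> e x y ->
  is_tree e (x |: V) ([set x; y] |: F).
Proof.
case/and4P => _ /forall_inP HF /forall_inP HC /eqP HcF xV yV exy.
have xy : x != y by apply: contraNneq xV => ->.
have nF : [set x; y] \notin F.
  apply: contra xV => /HF /andP[_ /subsetP]; apply; by rewrite !inE eqxx.
have V0 : 0 < #|V| by apply/card_gt0P; exists y.
apply/and4P; split.
- by apply/set0Pn; exists x; rewrite !inE eqxx.
- apply/forall_inP => f; rewrite !inE => /orP[/eqP->|fF].
  + apply/andP; split; first by apply/existsP; exists x; apply/existsP; exists y; rewrite exy eqxx.
    by apply/subsetP => z; rewrite !inE => /orP[]/eqP->; rewrite ?eqxx ?yV ?orbT.
  + case/andP: (HF f fF) => -> /subsetP sf; apply/subsetP => z /sf zV.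
    by rewrite !inE zV orbT.
- have sub : forall a b, connect [rel a b | [set a; b] \in F] a b ->
     connect [rel a b | [set a; b] \in [set x; y] |: F] a b.
    move=> a b; apply: connect_sub => a' b' /= H; apply: connect1.
    by rewrite /= inE H orbT.
  have cxy : connect [rel a b | [set a; b] \in [set x; y] |: F] x y.
    by apply: connect1; rewrite /= !inE eqxx.
  have cyx : connect [rel a b | [set a; b] \in [set x; y] |: F] y x.
    by apply: connect1; rewrite /= !inE setUC eqxx.
  apply/forall_inP => a Ha; apply/forall_inP => b Hb.
  rewrite !inE in Ha Hb.
  case/orP: Ha => [/eqP->|aV]; case/orP: Hb => [/eqP->|bV].
  + exact: connect0.
  + apply: connect_trans cxy _; apply: sub.
    by move/forall_inP: (HC y yV) => /(_ b bV).
  + apply: connect_trans _ cyx; apply: sub.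
    by move/forall_inP: (HC a aV) => /(_ y yV).
  + by apply: sub; move/forall_inP: (HC a aV) => /(_ b bV).
- by rewrite (cardsU1 [set x; y]) (cardsU1 x) nF xV HcF /=; lia.
Qed.

Variable cc : {set T} -> nat.

Lemma rb0 : rainbow cc set0.
Proof. by apply/forall_inP => f; rewrite inE. Qed.

Lemma rb_add F g : rainbow cc F -> (forall f, f \in F -> cc f != cc g) ->
  rainbow cc (g |: F).
Proof.
move=> /forall_inP HF Hg; apply/forall_inP => f Hf.
apply/forall_inP => h Hh; rewrite !inE in Hf Hh.
case/orP: Hf => [/eqP->|fF]; case/orP: Hh => [/eqP->|hF] //; apply/implyP => E.
- by rewrite eqxx.
- by move: (Hg h hF); rewrite (eqP E) eqxx.
- by move: (Hg f fF); rewrite E.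
- by move/forall_inP: (HF f fF) => /(_ h hF); rewrite E.
Qed.

End Trees.



Section G.
Variables (T : finType) (e : rel T).
Hypotheses (esym : symmetric e) (eirr : irreflexive e) (P4f : P4_free e)
  (conn : connected_graph e) (n2 : 1 < #|T|).

Lemma noP4 a b c d : e a b -> e b c -> e c d -> a != c -> b != d -> a != d ->
  ~~ e a c -> ~~ e b d -> ~~ e a d -> False.
Proof.
move=> *; apply: P4f; exists a, b, c, d; split => //; apply/and3P; split => //.
Qed.

Lemma en x y : e x y -> x != y.
Proof. by apply: contraTneq => ->; rewrite eirr. Qed.

Lemma diam2 x y : x != y -> ~~ e x y -> exists2 w, e x w & e w y.
Proof.
have /connectP [p pth ->] := conn x y.
suff : [\/ last x p = x, e x (last x p) | exists2 w, e x w & e w (last x p)].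
  by case=> [->|->|//]; rewrite ?eqxx.
elim/last_ind: p pth => [|p z IH]; first by constructor 1.
rewrite rcons_path last_rcons => /andP[/IH H ez].
set y0 := last x p in H ez.
have [->|nzx] := eqVneq z x; first by constructor 1.
case exz : (e x z); first by constructor 2.
have [yx|nyx] := eqVneq y0 x; first by move: ez; rewrite yx exz.
case exy : (e x y0); first by constructor 3; exists y0.
case: H => [E|E|[w xw wy]]; first by rewrite E eqxx in nyx.
  by rewrite E in exy.
case ewz : (e w z); first by constructor 3; exists w.
exfalso; apply: (@noP4 x w y0 z) => //; rewrite ?ewz ?exz ?exy 1?eq_sym //.
by apply: contraTneq xw => <-; rewrite exz.
Qed.

Lemma nbr x : exists w, e x w.
Proof.
have [y xy] : exists y, y != x by
  case/card_gt1P: n2 => a [b [_ _ ab]]; case: (eqVneq a x) => [E|ax]; [by exists b; rewrite -E eq_sym | by exists a].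
case exy : (e x y); first by exists y.
have xy' : x != y by rewrite eq_sym.
by have [w xw _] := diam2 xy' (negbT exy); exists w.
Qed.

Definition indep (U : {set T}) := [forall a in U, forall b in U, ~~ e a b].

Lemma indepP U a b : indep U -> a \in U -> b \in U -> ~~ e a b.
Proof. by move=> /forall_inP H /H /forall_inP; apply. Qed.

Lemma indep_sub (U V : {set T}) : U \subset V -> indep V -> indep U.
Proof.
move=> /subsetP sUV H; apply/forall_inP => a /sUV aV; apply/forall_inP => b /sUV bV.
exact: indepP H aV bV.
Qed.

Lemma cn J : J != set0 -> indep J -> exists w, forall j, j \in J -> e w j.
Proof.
move: {2}#|J| (erefl #|J|) => n; elim: n J => [|n IH] J cJ J0 IJ.
  by move: J0; rewrite -cards_eq0 cJ.
case/set0Pn: J0 => c cJc.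
have [J'0|J'n0] := eqVneq (J :\ c) set0.
  have [w cw] := nbr c; exists w => j jJ.
  have : j \notin J :\ c by rewrite J'0 inE.
  by rewrite !inE jJ andbT negbK => /eqP->; rewrite esym.
have IJ' : indep (J :\ c) by apply: indep_sub IJ; apply: subD1set.
have cJ' : #|J :\ c| = n by move: cJ; rewrite (cardsD1 c J) cJc; case.
have [w Hw] := IH (J :\ c) cJ' J'n0 IJ'.
case ewc : (e w c).
  exists w => j jJ; have [->//|jc] := eqVneq j c.
  by apply: Hw; rewrite !inE jc.
case/set0Pn: J'n0 => a aJ'; have := aJ'; rewrite !inE => /andP[ac aJ].
have nac : ~~ e a c by apply: indepP IJ aJ cJc.
have [w' aw' w'c] := diam2 ac nac.
have ww' : e w' w.
  case ew : (e w' w) => //; exfalso.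
  apply: (@noP4 c w' a w) => //.
  all: try first [done | by rewrite esym | by rewrite esym; apply: Hw | by rewrite eq_sym
    | by rewrite ew | by rewrite esym ewc | by apply: contraTneq w'c => ->; rewrite esym ewc
    | by apply: contraTneq w'c => ->; rewrite ewc
    | by apply: contraTneq (Hw a aJ') => <-; rewrite esym].
exists w' => j jJ; have [->//|jc] := eqVneq j c.
have jJ' : j \in J :\ c by rewrite !inE jc.
case ej : (e w' j) => //; exfalso.
apply: (@noP4 c w' w j) => //.
all: first [done | by rewrite esym | by apply: Hw | by rewrite eq_sym | by rewrite ej
  | by rewrite esym ewc | by rewrite esym (indepP IJ jJ cJc)
  | by apply: contraTneq w'c => ->; rewrite esym (indepP IJ jJ cJc)
  | by apply: contraTneq w'c => ->; rewrite (indepP IJ jJ cJc)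
  | by apply: contraTneq (Hw a aJ') => <-; rewrite esym
  | by apply: contraTneq (Hw j jJ') => <-; rewrite esym (indepP IJ jJ cJc) ].
Qed.

Lemma indep0 : indep set0.
Proof. by apply/forall_inP => a; rewrite inE. Qed.

Lemma mis_nbr I x : maxset indep I -> x \notin I -> exists2 i, i \in I & e x i.
Proof.
move=> mI xI; case: (boolP [exists i in I, e x i]) => [/exists_inP[i iI xi]|/exists_inP H].
  by exists i.
have Ix : indep (x |: I).
  apply/forall_inP => a aI; apply/forall_inP => b bI; rewrite !inE in aI bI.
  case/orP: aI => [/eqP->|aI]; case/orP: bI => [/eqP->|bI].
  - by rewrite eirr.
  - by apply/negP => xb; apply: H; exists b.
  - by apply/negP => xa; apply: H; exists a; rewrite // esym.
  - exact: indepP (maxsetp mI) aI bI.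
have := maxsetsup mI Ix (subsetUr _ _) => E.
by move: xI; rewrite -E !inE eqxx.
Qed.

Lemma join_exists : exists W : {set T},
  [/\ W != set0, ~: W != set0 & forall x w, x \notin W -> w \in W -> e x w].
Proof.
have [I mI _] := maxset_exists indep0.
have [x0 _] : exists x0 : T, true.
  by case/card_gt1P: n2 => a _; exists a.
have I0 : I != set0.
  apply/eqP => I0; have Ix : indep [set x0].
    by apply/forall_inP => a; rewrite inE => /eqP->; apply/forall_inP => b; rewrite inE => /eqP->; rewrite eirr.
  have := maxsetsup mI Ix; rewrite I0 sub0set => /(_ isT) /eqP.
  by rewrite -cards_eq0 cards1.
pose W := [set w | [forall i in I, e w i]].
have IW : forall i, i \in I -> i \notin W.
  by move=> i iI; rewrite inE; apply/negP => /forall_inP /(_ i iI); rewrite eirr.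
exists W; split.
- have [w Hw] := cn I0 (maxsetp mI).
  by apply/set0Pn; exists w; rewrite inE; apply/forall_inP.
- by case/set0Pn: I0 => i iI; apply/set0Pn; exists i; rewrite inE IW.
move=> x w xW wW.
have [xI|xI] := boolP (x \in I).
  by rewrite esym; move: wW; rewrite inE => /forall_inP; apply.
have [i iI xi] := mis_nbr mI xI.
have [i0 i0I xi0] : exists2 i0, i0 \in I & ~~ e x i0.
  move: xW; rewrite inE negb_forall_in => /exists_inP[i0 ? ?]; by exists i0.
have Hw : forall j, j \in I -> e w j by move: wW; rewrite inE => /forall_inP.
case exw : (e x w) => //; exfalso.
apply: (@noP4 x i w i0) => //.
all: try first [ done | by rewrite esym; apply: Hw | by apply: Hw | by rewrite exw
  | by apply: indepP (maxsetp mI) iI i0I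
  | by apply: contraNneq xW => ->
  | by apply: contraTneq xi => ->
  | by apply: contraNneq xI => -> ].
Qed.

Definition clique (U : {set T}) := [forall a in U, forall b in U, (a != b) ==> e a b].

Lemma cliqueP U a b : clique U -> a \in U -> b \in U -> a != b -> e a b.
Proof. by move=> /forall_inP H /H /forall_inP H' /H' /implyP. Qed.

Lemma CK (U K M : {set T}) :
  maxset [pred K : {set T} | (K \subset U) && clique K] K ->
  maxset [pred M : {set T} | (M \subset U) && indep M] M -> U != set0 ->
  exists2 u, u \in K & u \in M.
Proof.
move=> mK mM U0.
case/andP: (maxsetp mK) => KU cK; case/andP: (maxsetp mM) => MU indM.
have K0 : K != set0.
  apply/eqP => K0; case/set0Pn: U0 => u uU.
  have Cu : ((fun K : {set T} => (K \subset U) && clique K) [set u]).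
    rewrite /= sub1set uU /=; apply/forall_inP => a; rewrite inE => /eqP->.
    by apply/forall_inP => b; rewrite inE => /eqP->; rewrite eqxx.
  have := maxsetsup mK Cu; rewrite K0 sub0set => /(_ isT) /eqP.
  by rewrite -cards_eq0 cards1.
case: (boolP [exists u in K, u \in M]) => [/exists_inP[u ? ?]|/exists_inP H]; first by exists u.
exfalso.
have nbM : forall k, k \in K -> exists2 i, i \in M & e k i.
  move=> k kK; case: (boolP [exists i in M, e k i]) => [/exists_inP[i ? ?]|/exists_inP H']; first by exists i.
  have kM : k \notin M by apply/negP => kM; apply: H; exists k.
  have P' : ((fun M : {set T} => (M \subset U) && indep M) (k |: M)).
    rewrite /= subUset sub1set (subsetP KU k kK) MU /=.
    apply/forall_inP => a aI; apply/forall_inP => b bI; rewrite !inE in aI bI.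
    case/orP: aI => [/eqP->|aI]; case/orP: bI => [/eqP->|bI].
    - by rewrite eirr.
    - by apply/negP => kb; apply: H'; exists b.
    - by apply/negP => ka; apply: H'; exists a; rewrite // esym.
    - exact: indepP indM aI bI.
  have := maxsetsup mM P' (subsetUr _ _) => E.
  by move: kM; rewrite -E !inE eqxx.
have nnK : forall i, i \in M -> exists2 k, k \in K & ~~ e i k.
  move=> i iMi; case: (boolP [exists k in K, ~~ e i k]) => [/exists_inP[k ? ?]|/exists_inP H']; first by exists k.
  have iK : i \notin K by apply/negP => iK; apply: H; exists i.
  have P' : ((fun K : {set T} => (K \subset U) && clique K) (i |: K)).
    rewrite /= subUset sub1set (subsetP MU i iMi) KU /=.
    apply/forall_inP => a aI; apply/forall_inP => b bI; rewrite !inE in aI bI.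
    apply/implyP => ab.
    case/orP: aI => [/eqP Ea|aI]; case/orP: bI => [/eqP Eb|bI].
    - by rewrite Ea Eb eqxx in ab.
    - by rewrite Ea; apply/negPn/negP => nb; apply: H'; exists b.
    - by rewrite Eb esym; apply/negPn/negP => nb; apply: H'; exists a.
    - exact: cliqueP cK aI bI ab.
  have := maxsetsup mK P' (subsetUr _ _) => E.
  by move: iK; rewrite -E !inE eqxx.
case/set0Pn: K0 => k0 k0K.
pose N k := [set i in M | e k i].
have [k kK kmin] := @arg_minnP _ k0 (fun k => k \in K) (fun k => #|N k|) k0K.
have [i iM ki] := nbM k kK.
have [k' k'K ik'] := nnK i iM.
have sub : N k' \subset N k.
  apply/subsetP => j; rewrite !inE => /andP[jM k'j]; rewrite jM /=.
  case ekj : (e k j) => //; exfalso.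
  have kk' : k != k' by apply: contraNneq ik' => <-; rewrite esym.
  apply: (@noP4 i k k' j) => //.
  all: try first [ done | by rewrite esym | by apply: cliqueP cK kK k'K kk'
    | by rewrite ekj | by apply: indepP indM iM jM
    | by apply: contraTneq ik' => ->; rewrite esym
    | by apply: contraNneq ik' => ->
    | by apply/negP => /eqP E; apply: H; exists k'; rewrite // -E
    | by apply/negP => /eqP E; apply: H; exists k; rewrite // E
    | by apply/negP => /eqP E; apply: H; exists i; rewrite // E
    | by apply: contraTneq k'j => <-; rewrite esym ].
have lt : #|N k'| < #|N k|.
  apply: proper_card; apply/properP; split => //; exists i.
    by rewrite inE iM ki.
  by rewrite inE iM /= esym.
by have := kmin k' k'K; rewrite /= leqNgt lt.
Qed.

Lemma part k : forall U : {set T},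
  ~ (exists J : {set T}, [/\ J \subset U, indep J & #|J| = k.+1]) ->
  exists f : T -> nat, (forall x, x \in U -> f x < k) /\
    (forall x y, x \in U -> y \in U -> x != y -> f x = f y -> e x y).
Proof.
elim: k => [|k IH] U HU.
  have U0 : U = set0.
    apply/eqP; apply/negPn/negP => /set0Pn[u uU]; apply: HU; exists [set u].
    split; first by rewrite sub1set.
      by apply/forall_inP => a; rewrite inE => /eqP->; apply/forall_inP => b; rewrite inE => /eqP->; rewrite eirr.
    by rewrite cards1.
  by exists (fun _ => 0); rewrite U0; split => x; rewrite inE.
have [U0|Un0] := eqVneq U set0.
  by exists (fun _ => 0); rewrite U0; split => x; rewrite inE.
have c0 : (fun K : {set T} => (K \subset U) && clique K) set0.
  by rewrite /= sub0set; apply/forall_inP => a; rewrite inE.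
have [K mK _] := @maxset_exists _ [pred K : {set T} | (K \subset U) && clique K] set0 c0.
case/andP: (maxsetp mK) => KU cK.
have HU' : ~ (exists J : {set T}, [/\ J \subset U :\: K, indep J & #|J| = k.+1]).
  case=> J [JU iJ cJ].
  have JU0 : J \subset U by apply: subset_trans JU (subsetDl _ _).
  have i0 : (fun M : {set T} => (M \subset U) && indep M) J by rewrite /= JU0 iJ.
  have [M mM JM] := @maxset_exists _ [pred M : {set T} | (M \subset U) && indep M] J i0.
  case/andP: (maxsetp mM) => MU iM.
  have [u uK uM] := CK mK mM Un0.
  apply: HU; exists (u |: J); split.
  - by rewrite subUset sub1set (subsetP KU u uK) JU0.
  - by apply: indep_sub iM; rewrite subUset sub1set uM JM.
  - rewrite cardsU1 cJ; have -> // : u \notin J.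
    by apply/negP => /(subsetP JU); rewrite !inE uK.
have [f [Hf1 Hf2]] := IH _ HU'.
exists (fun x => if x \in K then k else f x); split.
  move=> x xU; case: ifP => xK //.
  by apply: ltn_trans (Hf1 x _) _; rewrite // !inE xK xU.
move=> x y xU yU xy; case: ifP => xK; case: ifP => yK.
- by move=> _; apply: cliqueP cK xK yK xy.
- by move=> E; have := Hf1 y; rewrite !inE yK yU -E ltnn => /(_ isT).
- by move=> E; have := Hf1 x; rewrite !inE xK xU E ltnn => /(_ isT).
- by apply: Hf2; rewrite // !inE ?xK ?yK.
Qed.

End G.



Lemma m4a a b c : a %% 4 != b %% 4 -> (a + c) %% 4 != (b + c) %% 4.
Proof. move=> H; apply/eqP => E; move/eqP: H; apply; lia. Qed.
Lemma m4b (a b c r : nat) : a %% 4 = r -> b %% 4 = r -> c %% 4 = r ->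
  ((a+b)%%4 != (r+1+b)%%4) /\ ((a+b)%%4 != (r+2+(r+1))%%4) /\ ((r+1+b)%%4 != (r+2+(r+1))%%4) /\
      ((a+b)%%4 != (c+(r+2))%%4) /\ ((r+1+b)%%4 != (c + (r+2))%%4) /\ ((r+2+(r+1))%%4 != (c+(r+2))%%4).
Proof. move=> ha hb hc; do !split; apply/eqP; lia. Qed.
Lemma m4c (a b c n : nat) : a %% 4 = b %% 4 -> a %% 4 = c %% 4 -> a != b -> a != c -> b != c ->
  a < n -> b < n -> c < n -> a %% 4 + 2 < n.
Proof. move=> *; lia. Qed.
Lemma m4d (a r : nat) : a %% 4 = r -> (a != r + 1) && (a != r + 2).
Proof. move=> *; apply/andP; split; apply/eqP; lia. Qed.
Lemma m4e (r : nat) : r + 2 != r + 1.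
Proof. lia. Qed.

Section Col.
Variables (T : finType) (e : rel T) (side : T -> bool) (cl : T -> nat) (m : nat).

Definition C x := [set y | (side y == side x) && (cl y == cl x)].
Definition sg x := index x (enum (C x)).
Definition col x y :=
  if side x == side y then (if cl x == cl y then (sg x + sg y) %% 4 else 0)
  else 4 + (cl x + cl y) %% m.
Definition colf (f : {set T}) : nat :=
  if [pick p : T * T | (p.1 != p.2) && (f == [set p.1; p.2])] is Some p
  then col p.1 p.2 else 0.

Lemma colC x y : col x y = col y x.
Proof. by rewrite /col [side y == side x]eq_sym [cl y == cl x]eq_sym [sg y + sg x]addnC [cl y + cl x]addnC. Qed.

Lemma pair_eq (a b x y : T) : [set a; b] = [set x; y] ->
  (a = x /\ b = y) \/ (a = y /\ b = x).
Proof.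
move=> E.
have ha : a \in [set x; y] by rewrite -E !inE eqxx.
have hb : b \in [set x; y] by rewrite -E !inE eqxx orbT.
have hx : x \in [set a; b] by rewrite E !inE eqxx.
have hy : y \in [set a; b] by rewrite E !inE eqxx orbT.
rewrite !inE in ha hb hx hy.
case/orP: ha => /eqP ha; case/orP: hb => /eqP hb; subst.
- by left; split => //; case/orP: hy => /eqP.
- by left.
- by right.
- by right; split => //; case/orP: hx => /eqP.
Qed.

Lemma colfE x y : x != y -> colf [set x; y] = col x y.
Proof.
move=> xy; rewrite /colf; case: pickP => [[a b] /= /andP[ab /eqP E]|H].
  by case: (pair_eq E) => [[-> ->]|[-> ->]] //; rewrite colC.
by have := H (x, y); rewrite /= xy eqxx.
Qed.

Definition tr V F := is_tree e V F && rainbow colf F.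

Lemma tr1 v : tr [set v] set0.
Proof. by rewrite /tr tree1 rb0. Qed.

Lemma tr_add V F x y : tr V F -> x \notin V -> y \in V -> e x y ->
  (forall f, f \in F -> colf f != col x y) -> tr (x |: V) ([set x; y] |: F).
Proof.
case/andP => t r xV yV xy H; rewrite /tr tree_add //=.
have xny : x != y by apply: contraNneq xV => ->.
by apply: rb_add => // f /H; rewrite colfE.
Qed.

Definition good x y z := exists V F, [&& tr V F, x \in V, y \in V & z \in V].

Lemma good_perm1 x y z : good x y z -> good y x z.
Proof. by case=> V [F /and4P[? ? ? ?]]; exists V, F; apply/and4P. Qed.
Lemma good_perm2 x y z : good x y z -> good x z y.
Proof. by case=> V [F /and4P[? ? ? ?]]; exists V, F; apply/and4P. Qed.

Ltac memtac := rewrite !inE ?eqxx ?orbT //.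

Lemma path3 a b c : a != b -> c != b -> c != a -> e a b -> e c b ->
  col a b != col c b -> good a b c.
Proof.
move=> ab cb ca eab ecb cc.
exists (c |: (a |: [set b])), ([set c; b] |: ([set a; b] |: set0)).
have t2 : tr (a |: [set b]) ([set a; b] |: set0).
  apply: tr_add => //; first exact: tr1.
  - by rewrite inE.
  - by rewrite inE.
  - by move=> f; rewrite inE.
have t3 : tr (c |: (a |: [set b])) ([set c; b] |: ([set a; b] |: set0)).
  apply: tr_add => //.
  - by rewrite !inE negb_or ca cb.
  - by rewrite !inE eqxx orbT.
  - by move=> f; rewrite !inE orbF => /eqP->; rewrite colfE.
by rewrite t3 !inE !eqxx !orbT.
Qed.

Lemma path4 a b d c : a != b -> d != b -> d != a -> c != d -> c != b -> c != a ->
  e a b -> e d b -> e c d ->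
  col a b != col d b -> col a b != col c d -> col d b != col c d -> good a b c.
Proof.
move=> ab db da cd cb ca eab edb ecd c1 c2 c3.
have t2 : tr (a |: [set b]) ([set a; b] |: set0).
  apply: tr_add => //; first exact: tr1.
  - by rewrite inE.
  - by rewrite inE.
  - by move=> f; rewrite inE.
have t3 : tr (d |: (a |: [set b])) ([set d; b] |: ([set a; b] |: set0)).
  apply: tr_add => //.
  - by rewrite !inE negb_or da db.
  - by rewrite !inE eqxx orbT.
  - by move=> f; rewrite !inE orbF => /eqP->; rewrite colfE.
have t4 : tr (c |: (d |: (a |: [set b]))) ([set c; d] |: ([set d; b] |: ([set a; b] |: set0))).
  apply: tr_add => //.
  - by rewrite !inE !negb_or cd ca cb.
  - by rewrite !inE eqxx.
  - by move=> f; rewrite !inE orbF => /orP[]/eqP->; rewrite colfE.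
by exists (c |: (d |: (a |: [set b]))), ([set c; d] |: ([set d; b] |: ([set a; b] |: set0)));
  rewrite t4 !inE !eqxx !orbT.
Qed.

Lemma star u a b c : a != u -> b != u -> c != u -> b != a -> c != a -> c != b ->
  e a u -> e b u -> e c u ->
  col a u != col b u -> col a u != col c u -> col b u != col c u -> good a b c.
Proof.
move=> au bu cu ba ca cb eau ebu ecu c1 c2 c3.
have t2 : tr (a |: [set u]) ([set a; u] |: set0).
  apply: tr_add => //; first exact: tr1.
  - by rewrite inE.
  - by rewrite inE.
  - by move=> f; rewrite inE.
have t3 : tr (b |: (a |: [set u])) ([set b; u] |: ([set a; u] |: set0)).
  apply: tr_add => //.
  - by rewrite !inE negb_or ba bu.
  - by rewrite !inE eqxx orbT.
  - by move=> f; rewrite !inE orbF => /eqP->; rewrite colfE.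
have t4 : tr (c |: (b |: (a |: [set u]))) ([set c; u] |: ([set b; u] |: ([set a; u] |: set0))).
  apply: tr_add => //.
  - by rewrite !inE !negb_or cb ca cu.
  - by rewrite !inE eqxx !orbT.
  - by move=> f; rewrite !inE orbF => /orP[]/eqP->; rewrite colfE.
by exists (c |: (b |: (a |: [set u]))), ([set c; u] |: ([set b; u] |: ([set a; u] |: set0)));
  rewrite t4 !inE !eqxx !orbT.
Qed.

Lemma path5 a b w1 w2 c : a != b -> w1 != b -> w1 != a -> w2 != w1 -> w2 != b -> w2 != a ->
  c != w2 -> c != w1 -> c != b -> c != a ->
  e a b -> e w1 b -> e w2 w1 -> e c w2 ->
  col a b != col w1 b -> col a b != col w2 w1 -> col w1 b != col w2 w1 ->
  col a b != col c w2 -> col w1 b != col c w2 -> col w2 w1 != col c w2 -> good a b c.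
Proof.
move=> ab w1b w1a w21 w2b w2a cw2 cw1 cb ca eab e1 e2 e3 c1 c2 c3 c4 c5 c6.
have t2 : tr (a |: [set b]) ([set a; b] |: set0).
  apply: tr_add => //; first exact: tr1.
  - by rewrite inE.
  - by rewrite inE.
  - by move=> f; rewrite inE.
have t3 : tr (w1 |: (a |: [set b])) ([set w1; b] |: ([set a; b] |: set0)).
  apply: tr_add => //.
  - by rewrite !inE negb_or w1a w1b.
  - by rewrite !inE eqxx orbT.
  - by move=> f; rewrite !inE orbF => /eqP->; rewrite colfE.
have t4 : tr (w2 |: (w1 |: (a |: [set b]))) ([set w2; w1] |: ([set w1; b] |: ([set a; b] |: set0))).
  apply: tr_add => //.
  - by rewrite !inE !negb_or w21 w2a w2b.
  - by rewrite !inE eqxx.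
  - by move=> f; rewrite !inE orbF => /orP[]/eqP->; rewrite colfE.
have t5 : tr (c |: (w2 |: (w1 |: (a |: [set b]))))
   ([set c; w2] |: ([set w2; w1] |: ([set w1; b] |: ([set a; b] |: set0)))).
  apply: tr_add => //.
  - by rewrite !inE !negb_or cw2 cw1 ca cb.
  - by rewrite !inE eqxx.
  - by move=> f; rewrite !inE orbF => /or3P[]/eqP->; rewrite colfE.
by exists (c |: (w2 |: (w1 |: (a |: [set b])))),
   ([set c; w2] |: ([set w2; w1] |: ([set w1; b] |: ([set a; b] |: set0))));
  rewrite t5 !inE !eqxx !orbT.
Qed.

Section Cases.
Hypotheses (m0 : 0 < m) (clm : forall x, cl x < m)
  (Hin : forall x y, side x = side y -> cl x = cl y -> x != y -> e x y)
  (Hcr : forall x y, side x != side y -> e x y)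
  (exS : forall b, exists u, side u = b).

Lemma mod_inj a b c : a < m -> b < m -> (a + c) %% m = (b + c) %% m -> a = b.
Proof.
move=> am bm /eqP; rewrite eqn_modDr !modn_small //; exact/eqP.
Qed.

Lemma colX x y : side x != side y -> col x y = 4 + (cl x + cl y) %% m.
Proof. by rewrite /col => /negbTE->. Qed.

Lemma colI x y : side x = side y -> cl x = cl y -> col x y = (sg x + sg y) %% 4.
Proof. by rewrite /col => -> ->; rewrite !eqxx. Qed.

Lemma colI4 x y : side x = side y -> cl x = cl y -> col x y < 4.
Proof. by move=> s c; rewrite colI // ltn_mod. Qed.

Lemma colX4 x y : side x != side y -> 4 <= col x y.
Proof. by move=> s; rewrite colX // leq_addr. Qed.

Lemma neqIX x y u v : side x = side y -> cl x = cl y -> side u != side v -> col x y != col u v.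
Proof.
move=> s c s'; have := colI4 s c; have := colX4 s'; lia.
Qed.

Lemma neqXX x y u : side x != side u -> side y != side u -> cl x != cl y -> col x u != col y u.
Proof.
move=> s1 s2 c; rewrite !colX //; apply/eqP => /eqP; rewrite eqn_add2l => /eqP E.
by move/eqP: c; apply; apply: (mod_inj (clm _) (clm _) E).
Qed.

Lemma case4 x y z : side x = side y -> side z != side x -> x != y -> good x y z.
Proof.
move=> sxy szx xy.
have zx : z != x by apply: contraNneq szx => ->.
have zy : z != y by apply: contraNneq szx => ->; rewrite sxy.
have szy : side z != side y by rewrite -sxy.
have [cxy|cxy] := eqVneq (cl x) (cl y).
  apply: path3 => //; first exact: Hin.
  - exact: Hcr.
  - by apply: neqIX.
apply: good_perm2; apply: path3 => //; rewrite 1?eq_sym //.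
- by apply: Hcr; rewrite eq_sym.
- by apply: Hcr; rewrite eq_sym.
- by apply: neqXX; rewrite // eq_sym.
Qed.

Lemma case2 x y z : side x = side y -> side z = side x -> cl x = cl y -> cl z != cl x ->
  x != y -> good x y z.
Proof.
move=> sxy szx cxy czx xy.
have zx : z != x by apply: contraNneq czx => ->.
have zy : z != y by apply: contraNneq czx => ->; rewrite cxy.
have [u su] := exS (~~ side x).
have ux : side u != side x by rewrite su; case: (side x).
have uy : side u != side y by rewrite -sxy.
have uz : side u != side z by rewrite szx.
apply: (@path4 x y u z) => //.
- by apply: contraNneq uy => ->.
- by apply: contraNneq ux => ->.
- by rewrite eq_sym; apply: contraNneq uz => ->.
- exact: Hin.
- exact: Hcr.
- by apply: Hcr; rewrite eq_sym.
- by apply: neqIX.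
- by apply: neqIX; rewrite // eq_sym.
- rewrite [col u y]colC; apply: neqXX; rewrite 1?eq_sym //. by rewrite -cxy.
Qed.

Lemma case3 x y z : side x = side y -> side z = side x ->
  cl x != cl y -> cl z != cl x -> cl z != cl y -> good x y z.
Proof.
move=> sxy szx cxy czx czy.
have [u su] := exS (~~ side x).
have ux : side u != side x by rewrite su; case: (side x).
have uy : side u != side y by rewrite -sxy.
have uz : side u != side z by rewrite szx.
apply: (@star u x y z); rewrite 1?eq_sym //.
- by apply: contraNneq ux => ->.
- by apply: contraNneq uy => ->.
- by apply: contraNneq uz => ->.
- by apply: contraNneq cxy => ->.
- by apply: contraNneq czx => ->.
- by apply: contraNneq czy => ->.
- by apply: Hcr; rewrite eq_sym.
- by apply: Hcr; rewrite eq_sym.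
- by apply: Hcr; rewrite eq_sym.
all: apply: neqXX; first [by [] | by rewrite eq_sym].
Qed.

Lemma case1 x y z : side y = side x -> side z = side x -> cl y = cl x -> cl z = cl x ->
  x != y -> x != z -> y != z -> good x y z.
Proof.
move=> sy sz cy cz xy xz yz.
pose s := enum (C x).
have inC : forall u, (u \in s) = (side u == side x) && (cl u == cl x).
  by move=> u; rewrite mem_enum inE.
have sgE : forall u, u \in s -> sg u = index u s.
  move=> u; rewrite inC => /andP[/eqP su /eqP cu].
  by rewrite /sg /s /C su cu.
have inj : forall u v, u \in s -> v \in s -> index u s = index v s -> u = v.
  by move=> u v us vs E; rewrite -(nth_index x us) -(nth_index x vs) E.
have xs : x \in s by rewrite inC !eqxx.
have ys : y \in s by rewrite inC sy cy !eqxx.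
have zs : z \in s by rewrite inC sz cz !eqxx.
have ilt : forall u, u \in s -> index u s < size s by move=> u; rewrite index_mem.
have ab : index x s != index y s by apply: contra_neq xy; apply: inj.
have ac : index x s != index z s by apply: contra_neq xz; apply: inj.
have bc : index y s != index z s by apply: contra_neq yz; apply: inj.
have exy : e x y by apply: Hin; rewrite // eq_sym.
have exz : e x z by apply: Hin; rewrite // eq_sym.
have eyz : e y z by apply: Hin; rewrite ?sy ?sz ?cy ?cz.
have colE : forall u v, u \in s -> v \in s -> col u v = (index u s + index v s) %% 4.
  move=> u v us vs; move: (us) (vs); rewrite !inC => /andP[/eqP su /eqP cu] /andP[/eqP sv /eqP cv].
  by rewrite colI ?su ?sv ?cu ?cv // !sgE.
have ha := ilt x xs; have hb := ilt y ys; have hc := ilt z zs.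
move: ab ac bc ha hb hc.
have := colE x y xs ys; have := colE x z xs zs; have := colE y z ys zs.
have := colE y x ys xs; have := colE z x zs xs; have := colE z y zs ys.
set a := index x s; set b := index y s; set c := index z s.
move=> Czy Czx Cyx Cyz Cxz Cxy ab ac bc ha hb hc.
have E : forall u v, u \in s -> v \in s -> u != v -> e u v.
  move=> u v; rewrite !inC => /andP[/eqP su /eqP cu] /andP[/eqP sv /eqP cv] uv.
  by apply: Hin; rewrite // ?su ?sv ?cu ?cv.
have [Dab|Dab] := eqVneq (a %% 4) (b %% 4); last first.
  apply: good_perm2; apply: (@path3 x z y) => //.
  all: try first [ done | by rewrite eq_sym | by apply: E | by apply: E; rewrite // eq_sym
    | by rewrite ?Cxz ?Cyz ?Cxy ?Czy ?Cyx ?Czx; apply: m4a ].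
have [Dac|Dac] := eqVneq (a %% 4) (c %% 4); last first.
  apply: (@path3 x y z) => //.
  all: try first [ done | by rewrite eq_sym | by apply: E | by apply: E; rewrite // eq_sym
    | by rewrite ?Cxz ?Cyz ?Cxy ?Czy ?Cyx ?Czx; apply: m4a ].
have [Dbc|Dbc] := eqVneq (b %% 4) (c %% 4); last first.
  apply: good_perm1; apply: (@path3 y x z) => //.
  all: try first [ done | by rewrite eq_sym | by apply: E | by apply: E; rewrite // eq_sym
    | by rewrite ?Cxz ?Cyz ?Cxy ?Czy ?Cyx ?Czx; apply: m4a ].
pose r0 := a %% 4.
have Ha : a %% 4 = r0 by [].
have Hb : b %% 4 = r0 by rewrite -Dab.
have Hc : c %% 4 = r0 by rewrite -Dac.
have big : r0 + 2 < size s by apply: (m4c Dab Dac).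
have big1 : r0 + 1 < size s by apply: leq_ltn_trans big; rewrite leq_add2l.
pose w1 := nth x s (r0 + 1); pose w2 := nth x s (r0 + 2).
have w1s : w1 \in s by apply: mem_nth.
have w2s : w2 \in s by apply: mem_nth.
have i1 : index w1 s = r0 + 1 by apply: index_uniq => //; exact: enum_uniq.
have i2 : index w2 s = r0 + 2 by apply: index_uniq => //; exact: enum_uniq.
have nI : forall u v, index u s != index v s -> u != v.
  by move=> u v; apply: contra_neq => ->.
have C1 := colE w1 y w1s ys; have C2 := colE w2 w1 w2s w1s; have C3 := colE z w2 zs w2s.
rewrite i1 in C1; rewrite i1 i2 in C2; rewrite i2 in C3.
case/andP: (m4d Ha) => a1 a2; case/andP: (m4d Hb) => b1 b2; case/andP: (m4d Hc) => c1 c2.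
have [k1 [k2 [k3 [k4 [k5 k6]]]]] := m4b Ha Hb Hc.
have w1y : w1 != y by apply: nI; rewrite i1 eq_sym.
have w1x : w1 != x by apply: nI; rewrite i1 eq_sym.
have w2y : w2 != y by apply: nI; rewrite i2 eq_sym.
have w2x : w2 != x by apply: nI; rewrite i2 eq_sym.
have w21 : w2 != w1 by apply: nI; rewrite i1 i2 m4e.
have zw2 : z != w2 by apply: nI; rewrite i2.
have zw1 : z != w1 by apply: nI; rewrite i1.
apply: (@path5 x y w1 w2 z) => //.
- by rewrite eq_sym.
- by rewrite eq_sym.
- exact: E.
- exact: E.
- exact: E.
- by rewrite Cxy C1.
- by rewrite Cxy C2.
- by rewrite C1 C2.
- by rewrite Cxy C3.
- by rewrite C1 C3.
- by rewrite C2 C3.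
Qed.


Lemma goodL x y z : side x = side y -> x != y -> x != z -> y != z -> good x y z.
Proof.
move=> sxy xy xz yz.
have [szx|szx] := eqVneq (side z) (side x); last by apply: case4.
have [cxy|cxy] := eqVneq (cl x) (cl y).
  have [czx|czx] := eqVneq (cl z) (cl x).
    by apply: case1.
  by apply: case2.
have [czx|czx] := eqVneq (cl z) (cl x).
  apply: good_perm2; apply: case2 => //; rewrite ?szx //; by rewrite eq_sym.
have [czy|czy] := eqVneq (cl z) (cl y); last by apply: case3.
apply: good_perm1; apply: good_perm2; apply: case2 => //.
all: try by rewrite -sxy szx.
all: by rewrite czy.
Qed.

Lemma good_all x y z : x != y -> x != z -> y != z -> good x y z.
Proof.
move=> xy xz yz.
have [sxy|sxy] := eqVneq (side x) (side y); first exact: goodL.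
have [sxz|sxz] := eqVneq (side x) (side z).
  by apply: good_perm2; apply: goodL; rewrite // eq_sym.
have syz : side y = side z.
  by move: sxy sxz; case: (side x); case: (side y); case: (side z).
by apply: good_perm1; apply: good_perm2; apply: goodL; rewrite // eq_sym.
Qed.

Lemma col_lt x y : col x y < 4 + m.
Proof.
rewrite /col; case: ifP => _; last by have := m0; lia.
by case: ifP => _; lia.
Qed.

Lemma colf_lt f : colf f < 4 + m.
Proof. by rewrite /colf; case: pickP => [p _|_]; rewrite ?col_lt //; lia. Qed.

End Cases.

End Col.



Lemma bigmin_le (I : finType) (P : pred I) (F : I -> nat) d i :
  P i -> \big[minn/d]_(j | P j) F j <= F i.
Proof.
move=> Pi; have : i \in index_enum I by rewrite mem_index_enum.
elim: (index_enum I) => [|j s IH] //; rewrite big_cons inE => /orP[/eqP<-|iss].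
  by rewrite Pi geq_minl.
by case: (P j); [apply: leq_trans (geq_minr _ _) (IH iss) | exact: IH iss].
Qed.

Theorem theorem7 (T : finType) (e : rel T) (r : nat) :
  simple_graph e -> connected_graph e -> 3 <= #|T| -> 3 <= r ->
  P4_free e -> star_free e r ->
  rx3 e <= sdiam3 e + r + 3.
Proof.
move=> [esym eirr] conn T3 r3 P4f SF.
have n2 : 1 < #|T| by apply: leq_trans T3.
have [W [W0 A0 join]] := join_exists esym eirr P4f conn n2.
have rr : (r - 1).+1 = r by lia.
have indA : ~ exists J : {set T}, [/\ J \subset ~: W, indep e J & #|J| = (r - 1).+1].
  case=> J [JA iJ cJ]; case/set0Pn: W0 => w wW; apply: SF; exists w, J; split.
  - by rewrite cJ rr.
  - by apply/negP => wJ; have := subsetP JA w wJ; rewrite inE wW.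
  - move=> x xJ; rewrite esym; apply: join => //.
    by have := subsetP JA x xJ; rewrite inE.
  - by move=> x y xJ yJ _; apply: indepP iJ xJ yJ.
have indB : ~ exists J : {set T}, [/\ J \subset W, indep e J & #|J| = (r - 1).+1].
  case=> J [JA iJ cJ]; case/set0Pn: A0 => a; rewrite inE => aW.
  apply: SF; exists a, J; split.
  - by rewrite cJ rr.
  - by apply/negP => aJ; have := subsetP JA a aJ; rewrite (negbTE aW).
  - by move=> x xJ; apply: join => //; apply: (subsetP JA).
  - by move=> x y xJ yJ _; apply: indepP iJ xJ yJ.
have [fA [fA1 fA2]] := part esym eirr P4f indA.
have [fB [fB1 fB2]] := part esym eirr P4f indB.
pose side := fun x => x \in W.
pose cl := fun x => if x \in W then fB x else fA x.
have m0 : 0 < r - 1 by lia.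
have clm : forall x, cl x < r - 1.
  move=> x; rewrite /cl; case: ifP => xW; first exact: fB1.
  by apply: fA1; rewrite inE xW.
have Hin : forall x y, side x = side y -> cl x = cl y -> x != y -> e x y.
  move=> x y; rewrite /side /cl => sxy; rewrite -sxy.
  case: ifP => xW E xy.
    by apply: fB2; rewrite // -sxy.
  by apply: fA2; rewrite // inE ?xW // -sxy xW.
have Hcr : forall x y, side x != side y -> e x y.
  move=> x y; rewrite /side.
  case: (boolP (x \in W)) => xW; case: (boolP (y \in W)) => yW //= _.
    by rewrite esym; apply: join.
  by apply: join.
have exS : forall b, exists u, side u = b.
  case.
    by case/set0Pn: W0 => w wW; exists w.
  by case/set0Pn: A0 => a; rewrite inE => aW; exists a; apply/negbTE.
pose c : {ffun {set T} -> 'I_(r + 2).+1} := [ffun f => inord (colf side cl (r - 1) f)].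
have cE : forall f, (c f : nat) = colf side cl (r - 1) f.
  move=> f; rewrite ffunE inordK //; have := colf_lt side cl m0 f; lia.
have rc : rainbow3_coloring e c.
  apply/forallP => S; apply/implyP => /eqP S3.
  have U := enum_uniq (pred_of_set S).
  move: S3 U; rewrite cardE.
  case E : (enum S) => [|x [|y [|z [|? ?]]]] //= _.
  rewrite !inE !negb_or andbT => /andP[/andP[xy xz] yz].
  have [V [F /and4P[/andP[tVF rb] xV yV zV]]] := good_all m0 clm Hin Hcr exS xy xz yz.
  apply/existsP; exists (V, F); rewrite /is_Stree /= tVF /=; apply/andP; split.
    apply/subsetP => u; rewrite -mem_enum E !inE => /or3P[]/eqP->//.
  move/forall_inP: rb => rb; apply/forall_inP => f fF; apply/forall_inP => g gF.
  by rewrite !cE; move/forall_inP: (rb f fF) => /(_ g gF).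
rewrite /rx3.
case: (leqP (r + 2).+1 (#|T| ^ 2)) => hk.
  have kk : (r + 2).+1 < (#|T| ^ 2).+1 by rewrite ltnS.
  have Pk : [exists c0 : {ffun {set T} -> 'I_(Ordinal kk)}, rainbow3_coloring e c0].
    by apply/existsP; exists c.
  have H := @bigmin_le _ (fun k : 'I_(#|T| ^ 2).+1 =>
     [exists c0 : {ffun {set T} -> 'I_k}, rainbow3_coloring e c0]) (fun k => k : nat) (#|T| ^ 2) (Ordinal kk) Pk.
  by apply: leq_trans H _; rewrite /=; lia.
have : \big[minn/#|T| ^ 2]_(k < (#|T| ^ 2).+1 | [exists c0 : {ffun {set T} -> 'I_k},
    rainbow3_coloring e c0]) (k : nat) <= #|T| ^ 2.
  elim/big_ind: _ => //.
  - by move=> a b ha hb; rewrite geq_min ha.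
  - by move=> i _; rewrite -ltnS.
lia.
Qed.
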